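(* Let $\mathscr C$ be a small permutative category, let $X\in\Phi(\mathscr C)$, let $u\in\mathcal M$, and write $\mathrm{supp}(X)=\{i_1<\dots<i_m\}$. Then there exists a unique $\widetilde\sigma\in\Sigma_m$ with $u(i_{\widetilde\sigma^{-1}(1)})<\dots<u(i_{\widetilde\sigma^{-1}(m)})$, and, as a morphism $\bigotimes_{j=1}^mX_{i_j}\to\bigotimes_{j=1}^mX_{i_{\widetilde\sigma^{-1}(j)}}$ in $\mathscr C$, the structure isomorphism $[u,1]_X$ is the coherence isomorphism associated to $\widetilde\sigma$.
   Context: A permutative category is a symmetric monoidal category $(\mathscr C,\otimes,\mathbf 1,\tau)$ whose associativity and unit isomorphisms are identities; for $\sigma\in\Sigma_K$ the coherence isomorphism $\bigotimes_{i=1}^KA_i\to\bigotimes_{i=1}^KA_{\sigma^{-1}(i)}$ associated to $\sigma$ is the composite of maps $\mathrm{id}\otimes\tau\otimes\mathrm{id}$ along a decomposition of $\sigma$ into adjacent transpositions. Let $\omega=\{1,2,\dots\}$ and $\mathcal M$ the monoid of injections $\omega\to\omega$. $\Phi(\mathscr C)$ has objects the sequences $X=(X_1,X_2,\dots)$ of objects of $\mathscr C$ with $X_i=\mathbf 1$ for almost all $i$, morphisms $X\to Y$ the morphisms $\bigotimes_{i\in\omega}X_i\to\bigotimes_{i\in\omega}Y_i$ in $\mathscr C$ (ordered tensor product of the non-unit entries), $\mathrm{supp}(X)=\{i:X_i\ne\mathbf 1\}$, $(u_*X)_i=X_j$ if $i=u(j)$ and $\mathbf 1$ if $i\notin\mathrm{im}(u)$,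 and structure isomorphism $[u,1]_X\colon X\to u_*X$ defined as the coherence isomorphism $\bigotimes_{i=1}^KX_i\to\bigotimes_{i=1}^KX_{\sigma^{-1}(i)}=\bigotimes_{i=1}^K(u_*X)_i$ associated to a permutation $\sigma\in\Sigma_K$ with $\sigma(i)=u(i)$ for all $i\le K$ with $X_i\ne\mathbf 1$, where $K$ is chosen with $X_i=\mathbf 1=(u_*X)_i$ for all $i>K$ (independent of choices). *)

(* Defs.v *)
From mathcomp Require Import all_boot all_fingroup.
Set Implicit Arguments. Unset Strict Implicit. Unset Printing Implicit Defensive.

(* A (small) permutative category, presented "arrows-only": a type of objects,
   a type of morphisms with domain/codomain maps, identities and composition
   (comp g f = g o f), a strict monoidal product that is strictly associative
   and strictly unital, and a symmetry tau satisfying the axioms of a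
   symmetric monoidal category (plus tau_{A,1} = id, as in May's definition). *)
Record PermCat := {
  ob : Type; hom : Type;
  dom : hom -> ob; cod : hom -> ob;
  idm : ob -> hom; comp : hom -> hom -> hom;
  tens : ob -> ob -> ob; tensm : hom -> hom -> hom; unit : ob;
  tau : ob -> ob -> hom;
  dom_id : forall a, dom (idm a) = a;
  cod_id : forall a, cod (idm a) = a;
  dom_comp : forall g f, cod f = dom g -> dom (comp g f) = dom f;
  cod_comp : forall g f, cod f = dom g -> cod (comp g f) = cod g;
  comp_idl : forall f, comp (idm (cod f)) f = f;
  comp_idr : forall f, comp f (idm (dom f)) = f;
  comp_assoc : forall h g f, cod f = dom g -> cod g = dom h ->
    comp h (comp g f) = comp (comp h g) f;
  dom_tensm : forall f g, dom (tensm f g) = tens (dom f) (dom g);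
  cod_tensm : forall f g, cod (tensm f g) = tens (cod f) (cod g);
  tensm_id : forall a b, tensm (idm a) (idm b) = idm (tens a b);
  tensm_comp : forall g f g' f', cod f = dom g -> cod f' = dom g' ->
    tensm (comp g f) (comp g' f') = comp (tensm g g') (tensm f f');
  tens_assoc : forall a b c, tens (tens a b) c = tens a (tens b c);
  tensm_assoc : forall f g h, tensm (tensm f g) h = tensm f (tensm g h);
  tens_unitl : forall a, tens unit a = a;
  tens_unitr : forall a, tens a unit = a;
  tensm_unitl : forall f, tensm (idm unit) f = f;
  tensm_unitr : forall f, tensm f (idm unit) = f;
  dom_tau : forall a b, dom (tau a b) = tens a b;
  cod_tau : forall a b, cod (tau a b) = tens b a;
  tau_nat : forall f g, comp (tau (cod f) (cod g)) (tensm f g)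
                        = comp (tensm g f) (tau (dom f) (dom g));
  tau_inv : forall a b, comp (tau b a) (tau a b) = idm (tens a b);
  tau_hex : forall a b c, tau a (tens b c)
      = comp (tensm (idm b) (tau a c)) (tensm (tau a b) (idm c));
  tau_unit : forall a, tau a unit = idm a
}.

Section Coh.
Variable C : PermCat.

Definition tens_list (l : seq (ob C)) : ob C := foldr (@tens C) (@unit C) l.

Definition swap_seq (T : Type) (l : seq T) (k : nat) : seq T :=
  match drop k l with
  | a :: b :: r => take k l ++ b :: a :: r
  | _ => l
  end.

Definition swap_mor (l : seq (ob C)) (k : nat) : hom C :=
  match drop k l with
  | a :: b :: r => tensm (idm (tens_list (take k l)))
                         (tensm (tau a b) (idm (tens_list r)))
  | _ => idm (tens_list l)
  end.

Fixpoint along (l : seq (ob C)) (ks : seq nat) : hom C :=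
  match ks with
  | [::] => idm (tens_list l)
  | k :: ks' => comp (along (swap_seq l k) ks') (swap_mor l k)
  end.
End Coh.

(* ks is a decomposition of sigma into adjacent transpositions: performing the
   swaps on positions 0..K-1 moves the factor at position i to position
   sigma(i), i.e. position j ends up holding sigma^-1(j). *)
Definition decomposes (K : nat) (sigma : 'S_K) (ks : seq nat) : bool :=
  all (fun k => k.+1 < K) ks &&
  (foldl (@swap_seq nat) (iota 0 K) ks == [seq val ((sigma^-1)%g i) | i <- enum 'I_K]).

(* f is the coherence isomorphism  (x)_i A_i -> (x)_i A_{sigma^-1(i)}
   associated to sigma (computed along some decomposition). *)
Definition is_coherence_iso (C : PermCat) (K : nat) (sigma : 'S_K)
    (A : seq (ob C)) (f : hom C) : Prop :=
  exists ks, decomposes sigma ks /\ f = along A ks.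

(* f is (a representative of) the structure isomorphism [u,1]_X : X -> u_* X,
   for any admissible choice of K and sigma.  Indices are 0-based. *)
Definition is_structure_iso (C : PermCat) (X : nat -> ob C) (u : nat -> nat)
    (f : hom C) : Prop :=
  exists K (sigma : 'S_K),
    (forall i, K <= i -> X i = unit C) /\
    (forall i, K <= i -> forall j, u j = i -> X j = unit C) /\
    (forall i : 'I_K, X i <> unit C -> val (sigma i) = u i) /\
    is_coherence_iso sigma [seq X i | i <- iota 0 K] f.

(* Main.v *)
Require Import Defs.
From mathcomp Require Import all_boot all_fingroup zify.
From Stdlib Require Import Lia Classical.
Set Implicit Arguments. Unset Strict Implicit. Unset Printing Implicit Defensive.

Notation ID := Defs.idm.
Notation CO := Defs.comp.
Notation DO := Defs.dom.

Section Alg.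
Variable C : PermCat.
Implicit Types (f g h : hom C) (x y z a b c : ob C).

Ltac ty := repeat first [progress rewrite ?(dom_tensm, cod_tensm, dom_id, cod_id, dom_tau, cod_tau, tens_assoc, tens_unitl, tens_unitr) | rewrite dom_comp | rewrite cod_comp].

Lemma comp_idl' x f : cod f = x -> CO (ID x) f = f.
Proof. by move<-; rewrite comp_idl. Qed.
Lemma comp_idr' x f : DO f = x -> CO f (ID x) = f.
Proof. by move<-; rewrite comp_idr. Qed.
Lemma comp_idid x : CO (ID x) (ID x) = ID x.
Proof. by apply: comp_idl'; rewrite cod_id. Qed.

Lemma tau_unitl a : tau (unit C) a = ID a.
Proof.
have := tau_inv a (unit C); rewrite tau_unit comp_idr'; last by rewrite dom_tau tens_unitl.
by rewrite tens_unitr.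
Qed.

Lemma comp_tens_id f g x y : DO f = x -> cod g = y ->
  CO (tensm f (ID y)) (tensm (ID x) g) = tensm f g.
Proof.
move=> <- <-; rewrite -tensm_comp ?comp_idr ?comp_idl //; by ty.
Qed.
Lemma comp_id_tens f g x y : cod f = x -> DO g = y ->
  CO (tensm (ID x) g) (tensm f (ID y)) = tensm f g.
Proof.
move=> <- <-; rewrite -tensm_comp ?comp_idr ?comp_idl //; by ty.
Qed.
Lemma tensm_compl f g x : cod f = DO g ->
  tensm (CO g f) (ID x) = CO (tensm g (ID x)) (tensm f (ID x)).
Proof. by move=> H; rewrite -(tensm_comp H) ?comp_idid // dom_id cod_id. Qed.
Lemma tensm_compr f g x : cod f = DO g ->
  tensm (ID x) (CO g f) = CO (tensm (ID x) g) (tensm (ID x) f).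
Proof. by move=> H; rewrite -(tensm_comp _ H) ?comp_idid // dom_id cod_id. Qed.

Lemma dom_comp' f g x : cod f = DO g -> DO f = x -> DO (CO g f) = x.
Proof. by move=> H <-; rewrite dom_comp. Qed.
Lemma cod_comp' f g x : cod f = DO g -> cod g = x -> cod (CO g f) = x.
Proof. by move=> H <-; rewrite cod_comp. Qed.

Lemma hex2 a b c : tau (tens b c) a =
  CO (tensm (tau b a) (ID c)) (tensm (ID b) (tau c a)).
Proof.
set R := CO _ _.
have HR : CO (tau a (tens b c)) R = ID (tens b (tens c a)).
  rewrite tau_hex /R.
  rewrite -comp_assoc; try by ty.
  rewrite (comp_assoc (h:=tensm (tau a b) (ID c))); try by ty.
  rewrite -tensm_compl; last by ty.
  rewrite tau_inv tensm_id comp_idl'; last by ty.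
  by rewrite -tensm_compr ?tau_inv ?tensm_id //; ty.
rewrite -[LHS](comp_idr' (x := tens b (tens c a))); last by ty.
rewrite -HR comp_assoc; try by (rewrite /R; ty).
by rewrite tau_inv comp_idl' // /R; ty.
Qed.

Lemma E1gen P T Q y y' S : DO S = y -> cod S = y' ->
  CO (tensm (tau P T) (ID (tens Q y'))) (tensm (ID (tens P (tens T Q))) S)
  = CO (tensm (ID T) (tensm (ID (tens P Q)) S)) (tensm (tau P T) (ID (tens Q y))).
Proof.
move=> dS cS.
have -> : ID (tens P (tens T Q)) = tensm (tensm (ID P) (ID T)) (ID Q)
  by rewrite !tensm_id tens_assoc.
rewrite tensm_assoc tensm_id.
rewrite comp_tens_id; last by ty; rewrite cS.
  2: by ty.
rewrite -[ID (tens P Q)]tensm_id tensm_assoc -(tensm_assoc (ID T)) tensm_id.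
rewrite comp_id_tens //; by ty; rewrite ?dS.
Qed.

Lemma E2gen M T y y' B2 : DO M = y -> cod M = y' ->
  CO (tensm (tau y' T) (ID B2)) (tensm (tensm M (ID T)) (ID B2))
  = CO (tensm (ID T) (tensm M (ID B2))) (tensm (tau y T) (ID B2)).
Proof.
move=> dM cM.
rewrite -tensm_compl; last by ty; rewrite cM.
have := tau_nat M (ID T); rewrite cM cod_id dM dom_id => ->.
rewrite -tensm_assoc tensm_compl //; by ty; rewrite dM.
Qed.

Lemma E3gen A a b B :
  CO (tensm (tau (tens A b) a) (ID B)) (tensm (ID A) (tensm (tau a b) (ID B)))
  = tensm (tau A a) (ID (tens b B)).
Proof.
rewrite hex2 tensm_compl; last by ty.
rewrite -comp_assoc; try by ty.
rewrite !tensm_assoc -tensm_compr; last by ty.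
rewrite -tensm_compl; last by ty.
rewrite tau_inv !tensm_id comp_idr' //; by ty.
Qed.

Lemma E4gen A a b B :
  CO (tensm (tau A b) (ID (tens a B))) (tensm (ID A) (tensm (tau a b) (ID B)))
  = tensm (tau (tens A a) b) (ID B).
Proof.
rewrite hex2 tensm_compl; last by ty.
by rewrite !tensm_assoc tensm_id.
Qed.

End Alg.

Section L.
Variable C : PermCat.
Variable X : nat -> ob C.
Ltac ty := repeat first [progress rewrite ?(dom_tensm, cod_tensm, dom_id, cod_id, dom_tau, cod_tau, tens_assoc, tens_unitl, tens_unitr) | rewrite dom_comp | rewrite cod_comp].

Definition TL (l : seq nat) : ob C := tens_list (map X l).
Lemma TL_nil : TL [::] = unit C. Proof. by []. Qed.
Lemma TL_cons x l : TL (x :: l) = tens (X x) (TL l). Proof. by []. Qed.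
Lemma TL_cat l1 l2 : TL (l1 ++ l2) = tens (TL l1) (TL l2).
Proof.
elim: l1 => [|x l IH]; first by rewrite TL_nil tens_unitl.
by rewrite cat_cons !TL_cons IH tens_assoc.
Qed.

Ltac tyL := repeat first [progress rewrite ?(dom_tensm, cod_tensm, dom_id, cod_id, dom_tau, cod_tau, tens_assoc, tens_unitl, tens_unitr, TL_cat, TL_cons, TL_nil) | rewrite dom_comp | rewrite cod_comp].

Fixpoint canon (ls tgt : seq nat) {struct tgt} : hom C :=
 match tgt with
 | [::] => ID (TL ls)
 | t :: tgt' =>
   CO (tensm (ID (X t)) (canon (take (index t ls) ls ++ drop (index t ls).+1 ls) tgt'))
      (tensm (tau (TL (take (index t ls) ls)) (X t)) (ID (TL (drop (index t ls).+1 ls))))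
 end.

Lemma canon_cons P t Q tgt : t \notin P ->
  canon (P ++ t :: Q) (t :: tgt) =
  CO (tensm (ID (X t)) (canon (P ++ Q) tgt)) (tensm (tau (TL P) (X t)) (ID (TL Q))).
Proof.
move=> tP /=.
have -> : index t (P ++ t :: Q) = size P by rewrite index_cat (negbTE tP) /= eqxx addn0.
rewrite take_size_cat // drop_cat ltnNge leqnSn /= subSn // subnn /=.
by case: Q.
Qed.

Lemma split_mem (ls : seq nat) t : t \in ls ->
  ls = take (index t ls) ls ++ t :: drop (index t ls).+1 ls.
Proof.
move=> tl; rewrite -{1}(cat_take_drop (index t ls) ls) (drop_nth t) ?index_mem //.
by rewrite nth_index.
Qed.

Lemma canon_typ tgt : forall ls, perm_eq ls tgt ->
  DO (canon ls tgt) = TL ls /\ cod (canon ls tgt) = TL tgt.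
Proof.
elim: tgt => [|t tgt IH] ls Hp.
  by rewrite (perm_small_eq _ Hp) //= dom_id cod_id.
have tl : t \in ls by rewrite (perm_mem Hp) mem_head.
set P := take (index t ls) ls; set Q := drop (index t ls).+1 ls.
have Els : ls = P ++ t :: Q by exact: split_mem.
have Hp' : perm_eq (P ++ Q) tgt.
  rewrite -(perm_cons t); apply: perm_trans Hp.
  by rewrite Els -cat1s perm_catCA.
have [d c] := IH _ Hp'.
rewrite /= -/P -/Q.
split.
  rewrite dom_comp; first by rewrite dom_tensm dom_tau dom_id [in RHS]Els TL_cat TL_cons tens_assoc.
  by ty; rewrite d TL_cat.
rewrite cod_comp; first by rewrite cod_tensm cod_id c.
by ty; rewrite d TL_cat.
Qed.

Lemma mid_facts (A1 R tgt : seq nat) t : uniq (A1 ++ t :: R) -> perm_eq (A1 ++ t :: R) (t :: tgt) ->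
  [/\ t \notin A1, uniq (A1 ++ R) & perm_eq (A1 ++ R) tgt].
Proof.
move=> U Hp.
have Hc : perm_eq (A1 ++ t :: R) (t :: (A1 ++ R)) by rewrite -cat1s perm_catCA.
have U' : uniq (t :: (A1 ++ R)) by rewrite -(perm_uniq Hc).
move: (U') => /= /andP [tn U2]; split => //.
  by apply: contra tn; rewrite mem_cat => ->.
by rewrite -(perm_cons t); apply: perm_trans Hp; rewrite perm_sym.
Qed.

Lemma perm_swap2 (A B : seq nat) a b : perm_eq (A ++ b :: a :: B) (A ++ a :: b :: B).
Proof. by rewrite perm_cat2l; apply/permPl; exact: (perm_catCA [::b] [::a] B). Qed.

Definition SW A a b B := tensm (ID (TL A)) (tensm (tau (X a) (X b)) (ID (TL B))).

Lemma canon_swap tgt : forall A a b B, uniq (A ++ a :: b :: B) ->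
  perm_eq (A ++ a :: b :: B) tgt ->
  CO (canon (A ++ b :: a :: B) tgt) (SW A a b B) = canon (A ++ a :: b :: B) tgt.
Proof.
elim: tgt => [|t tgt IH] A a b B U Hp.
  by move: (perm_size Hp); rewrite size_cat /= addnS.
have : t \in A ++ a :: b :: B by rewrite (perm_mem Hp) mem_head.
rewrite mem_cat !inE => /orP [tA | /orP [/eqP ta | /orP [/eqP tb | tB]]].
-
  case/splitPr: tA U Hp => A1 A2 U Hp.
  move: U Hp; rewrite -!catA !cat_cons => U Hp.
  have [tA1 U' Hp'] := mid_facts U Hp.
  rewrite canon_cons // canon_cons //.
  have := IH (A1 ++ A2) a b B; rewrite -!catA => /(_ U' Hp') <-.
  have Ub : uniq (A1 ++ A2 ++ b :: a :: B).
    by rewrite catA (perm_uniq (perm_swap2 _ _ _ _)) -catA.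
  have Hpb' : perm_eq (A1 ++ A2 ++ b :: a :: B) tgt.
    by apply: perm_trans Hp'; rewrite !catA perm_swap2.
  have [d c] := canon_typ Hpb'.
  rewrite tensm_compr; last by rewrite d /SW; tyL.
  rewrite -!comp_assoc; try by rewrite /SW; tyL; rewrite ?d ?c; tyL.
  congr (CO _ _).
  rewrite /SW !TL_cat !TL_cons.
  by apply: E1gen; tyL.
-
  subst t.
  have [aA U' Hp'] := mid_facts U Hp.
  have [d c] := canon_typ Hp'.
  have E : A ++ b :: a :: B = (A ++ [:: b]) ++ a :: B by rewrite -catA.
  have aAb : a \notin A ++ [:: b].
    have ab : a != b.
      by move: U; rewrite cat_uniq => /and3P [_ _ /=]; rewrite inE negb_or => /andP [/andP [-> _] _].
    by rewrite mem_cat inE negb_or aA.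
  rewrite canon_cons // E canon_cons // -catA.
  rewrite -comp_assoc; try by rewrite /SW; tyL; rewrite ?d ?c; tyL.
  congr (CO _ _).
  by rewrite /SW TL_cat TL_cons TL_nil tens_unitr TL_cons E3gen.
-
  subst t.
  have E : A ++ a :: b :: B = (A ++ [:: a]) ++ b :: B by rewrite -catA.
  move: (U) (Hp); rewrite E => U1 Hp1.
  have [bA U' Hp'] := mid_facts U1 Hp1.
  rewrite -catA in Hp'.
  have [d c] := canon_typ Hp'.
  have bA' : b \notin A by apply: contra bA; rewrite mem_cat => ->.
  rewrite canon_cons // canon_cons // -catA.
  rewrite -comp_assoc; try by rewrite /SW; tyL; rewrite ?d ?c; tyL.
  congr (CO _ _).
  by rewrite /SW TL_cat !TL_cons TL_nil tens_unitr E4gen.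
-
  case/splitPr: tB U Hp IH => B1 B2 U Hp IH.
  have E : forall x y, A ++ x :: y :: B1 ++ t :: B2 = (A ++ x :: y :: B1) ++ t :: B2
    by move=> x y; rewrite -catA.
  move: U Hp; rewrite !E => U Hp.
  have [tA U' Hp'] := mid_facts U Hp.
  have tA' : t \notin A ++ b :: a :: B1.
    by move: tA; rewrite !mem_cat !inE; case: (t \in A); case: (t == a); case: (t == b).
  rewrite canon_cons // canon_cons // -!catA !cat_cons.
  move: U' Hp'; rewrite -!catA !cat_cons => U' Hp'.
  have := IH A a b (B1 ++ B2) U' Hp' => <-.
  have Hpb' : perm_eq (A ++ b :: a :: B1 ++ B2) tgt.
    by apply: perm_trans Hp'; rewrite perm_swap2.
  have [d c] := canon_typ Hpb'.
  rewrite tensm_compr; last by rewrite d /SW; tyL.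
  rewrite -!comp_assoc; try by rewrite /SW; tyL; rewrite ?d ?c; tyL.
  congr (CO _ _).
  have e1 : SW A a b (B1 ++ t :: B2) = tensm (tensm (SW A a b B1) (ID (X t))) (ID (TL B2)).
    by rewrite /SW !tensm_assoc !tensm_id TL_cat TL_cons.
  have e2 : SW A a b (B1 ++ B2) = tensm (SW A a b B1) (ID (TL B2)).
    by rewrite /SW !tensm_assoc tensm_id TL_cat.
  rewrite e1 e2.
  by apply: E2gen; rewrite /SW; tyL.
Qed.

Lemma canon_id ls : canon ls ls = ID (TL ls).
Proof.
elim: ls => [|t ls IH] //.
rewrite -[t :: ls]/([::] ++ t :: ls) canon_cons // /= IH TL_nil tau_unitl tensm_id comp_idid.
by [].
Qed.

Lemma swap_seq_map (T U : Type) (f : T -> U) (l : seq T) k :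
  swap_seq (map f l) k = map f (swap_seq l k).
Proof.
rewrite /swap_seq -map_drop -map_take.
by case: (drop k l) => [|a [|b r]] //=; rewrite map_cat.
Qed.

Lemma swap_dec (T : Type) (l : seq T) k : k.+1 < size l ->
  exists a b B, drop k l = a :: b :: B.
Proof.
move=> H; case E: (drop k l) => [|a [|b B]]; last by exists a, b, B.
  by move: (congr1 size E); rewrite size_drop /= => H'; lia.
by move: (congr1 size E); rewrite size_drop /= => H'; lia.
Qed.

Lemma perm_swap_seq (l : seq nat) k : perm_eq (swap_seq l k) l.
Proof.
rewrite /swap_seq; case E: (drop k l) => [|a [|b B]] //.
rewrite -{2}(cat_take_drop k l) E perm_cat2l.
by apply/permPl; exact: (perm_catCA [::b] [::a] B).
Qed.

Lemma perm_foldl (l : seq nat) ks : perm_eq (foldl (@swap_seq nat) l ks) l.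
Proof.
elim: ks l => [|k ks IH] l /=; first exact: perm_refl.
by apply: perm_trans (IH _) (perm_swap_seq _ _).
Qed.

Lemma along_canon ks : forall ls, uniq ls -> all (fun k => k.+1 < size ls) ks ->
  along (map X ls) ks = canon ls (foldl (@swap_seq nat) ls ks).
Proof.
elim: ks => [|k ks IH] ls U /=; first by rewrite canon_id.
move=> /andP [Hk Hks].
rewrite swap_seq_map IH; first last.
- by rewrite (perm_size (perm_swap_seq _ _)).
- by rewrite (perm_uniq (perm_swap_seq _ _)).
have [a [b [B E]]] := swap_dec Hk.
have El : ls = take k ls ++ a :: b :: B by rewrite -E cat_take_drop.
have Es : swap_seq ls k = take k ls ++ b :: a :: B by rewrite /swap_seq E.
have Em : swap_mor (map X ls) k = SW (take k ls) a b B.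
  by rewrite /swap_mor -map_drop -map_take E.
rewrite Em Es canon_swap -?El //.
rewrite -Es; apply: (perm_trans (y := swap_seq ls k)); rewrite perm_sym ?perm_swap_seq //; exact: perm_foldl.
Qed.

Lemma TL_filter (p : pred nat) l : (forall i, ~~ p i -> X i = unit C) ->
  TL (filter p l) = TL l.
Proof.
move=> Hp; elim: l => [|x l IH] //=.
case px: (p x); first by rewrite !TL_cons IH.
by rewrite IH TL_cons Hp ?px // tens_unitl.
Qed.

Lemma canon_filter (p : pred nat) tgt : (forall i, ~~ p i -> X i = unit C) ->
  forall ls, uniq ls -> perm_eq ls tgt ->
  canon ls tgt = canon (filter p ls) (filter p tgt).
Proof.
move=> Hp; elim: tgt => [|t tgt IH] ls U Hpe.
  by rewrite (perm_small_eq _ Hpe).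
have tl : t \in ls by rewrite (perm_mem Hpe) mem_head.
rewrite (split_mem tl) in U Hpe *.
set P := take _ ls; set Q := drop _ ls.
have [tP U' Hp'] := mid_facts U Hpe.
have [d c] := canon_typ Hp'.
rewrite canon_cons // filter_cat /=.
case pt: (p t).
  rewrite canon_cons; last by rewrite mem_filter negb_and tP orbT.
  by rewrite IH // filter_cat !TL_filter.
have Xt : X t = unit C by apply: Hp; rewrite pt.
rewrite Xt tensm_unitl tau_unit tensm_id comp_idr'; last by rewrite d TL_cat.
by rewrite IH // filter_cat.
Qed.

End L.

Lemma foldl_swap_map (f : nat -> nat) (l : seq nat) ks :
  foldl (@swap_seq nat) (map f l) ks = map f (foldl (@swap_seq nat) l ks).
Proof. by elim: ks l => [|k ks IH] l //=; rewrite swap_seq_map IH. Qed.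

Lemma memL (s : seq nat) (p : 'S_(size s)) :
  [seq nth 0 s (val (p j)) | j <- enum 'I_(size s)] =i s.
Proof.
move=> x; apply/mapP/idP.
  by case=> j _ ->; apply: mem_nth; exact: ltn_ord.
move=> xs; have Hi : index x s < size s by rewrite index_mem.
exists ((p^-1)%g (Ordinal Hi)); first by rewrite mem_enum.
by rewrite permKV /= nth_index.
Qed.

Theorem corollary2p14 (C : PermCat) (X : nat -> ob C) (u : nat -> nat)
    (s : seq nat)
    (Xfin : exists N, forall i, N <= i -> X i = unit C)
    (u_inj : injective u)
    (s_sorted : sorted ltn s)
    (s_supp : forall i, i \in s <-> X i <> unit C) :
  (exists! st : 'S_(size s),
      sorted ltn [seq u (nth 0 s (val ((st^-1)%g j))) | j <- enum 'I_(size s)]) /\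
  (forall st : 'S_(size s),
      sorted ltn [seq u (nth 0 s (val ((st^-1)%g j))) | j <- enum 'I_(size s)] ->
      forall f g, is_structure_iso X u f ->
        is_coherence_iso st [seq X i | i <- s] g -> f = g).
Proof.
set m := size s.
have Us : uniq s by apply: (sorted_uniq ltn_trans ltnn).
pose R := relpre u ltn.
have Rtr : transitive R by move=> y x z; rewrite /R /=; apply: ltn_trans.
have Rirr : irreflexive R by move=> x; rewrite /R /= ltnn.
have Hsort : forall st : 'S_m,
    sorted ltn [seq u (nth 0 s (val ((st^-1)%g j))) | j <- enum 'I_m] =
    sorted R [seq nth 0 s (val ((st^-1)%g j)) | j <- enum 'I_m].
  by move=> st; rewrite -sorted_map -map_comp.
split.
- pose r := sort (relpre u leq) s.
  have rs : perm_eq r s by rewrite perm_sort.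
  have sr : size r = m by rewrite (perm_size rs).
  have Ur : uniq r by rewrite (perm_uniq rs).
  have Hf : forall j : 'I_m, index (nth 0 r j) s < m.
    by move=> j; rewrite index_mem -(perm_mem rs) mem_nth // sr.
  pose f (j : 'I_m) := Ordinal (Hf j).
  have finj : injective f.
    move=> j j' /(congr1 val) /= H.
    have : nth 0 r j = nth 0 r j'.
      by rewrite -(nth_index 0 (_ : nth 0 r j \in s)) ?H ?nth_index // -(perm_mem rs) mem_nth // sr.
    by move/eqP; rewrite nth_uniq ?sr // => /eqP /val_inj.
  pose st0 := ((perm finj)^-1)%g.
  have Hst : sorted ltn [seq u (nth 0 s (val ((st0^-1)%g j))) | j <- enum 'I_m].
    have -> : [seq u (nth 0 s (val ((st0^-1)%g j))) | j <- enum 'I_m] = map u r.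
      rewrite -[in RHS](mkseq_nth 0 r) /mkseq sr -val_enum_ord -!map_comp.
      apply: eq_map => j /=; rewrite /st0 invgK permE /= nth_index //.
      by rewrite -(perm_mem rs) mem_nth // sr.
    rewrite ltn_sorted_uniq_leq (map_inj_uniq u_inj) Ur sorted_map /=.
    by apply: sort_sorted => x y; exact: leq_total.
  exists st0; split => // st' Hst'.
  apply: invg_inj; apply/permP => j.
  move: Hst Hst'; rewrite !Hsort => H1 H2.
  have E := irr_sorted_eq Rtr Rirr H1 H2 (fun x => etrans (memL _ x) (esym (memL _ x))).
  have := (proj2 (eq_in_map _ _ _) E) j (mem_enum _ _) => /= /eqP.
  rewrite nth_uniq //; try exact: ltn_ord. by move/eqP; apply: val_inj.
- move=> st Hst f g [K [sigma [XK [Hu [Hs [ks [/andP [Hall /eqP Hfold] ->]]]]]]].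
  case=> ks' [/andP [Hall' /eqP Hfold'] ->].
  have Xu : forall i, ~~ (i \in s) -> X i = unit C.
    move=> i /negP Hi; apply: NNPP => H; apply: Hi; exact/s_supp.
  have sK : forall x, x \in s -> x < K.
    move=> x /s_supp Hx; rewrite ltnNge; apply/negP => Kx; exact: Hx (XK _ Kx).
  rewrite -[[seq X i | i <- iota 0 K]]/(map X (iota 0 K)) along_canon ?iota_uniq ?size_iota //.
  rewrite along_canon // Hfold.
  rewrite -[in foldl _ s _](mkseq_nth 0 s) /mkseq foldl_swap_map Hfold' -map_comp.
  rewrite (canon_filter (p := fun i => i \in s)) //; first last.
  - by rewrite -Hfold perm_sym; exact: perm_foldl.
  - exact: iota_uniq.
  set tgtf := [seq val ((sigma^-1)%g i) | i <- enum 'I_K].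
  set tgtg := map _ _.
  have memf : tgtf =i iota 0 K.
    by move=> x; rewrite /tgtf -Hfold (perm_mem (perm_foldl _ _)).
  have -> : [seq i <- iota 0 K | i \in s] = s.
    apply: (irr_sorted_eq ltn_trans ltnn) => //.
      by apply: sorted_filter; [exact: ltn_trans | exact: iota_ltn_sorted].
    move=> x; rewrite mem_filter mem_iota /=.
    by case xs: (x \in s) => //=; rewrite sK.
  have -> : [seq i <- tgtf | i \in s] = tgtg.
    apply: (irr_sorted_eq Rtr Rirr).
    + rewrite /tgtf filter_map sorted_map.
      apply: (sub_in_sorted (P := fun i : 'I_K => val ((sigma^-1)%g i) \in s)
                            (e := fun i j : 'I_K => val i < val j)).
      * move=> i j Hi Hj /= ij.
        have Ei : u (val ((sigma^-1)%g i)) = val i.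
          by have := Hs ((sigma^-1)%g i); rewrite permKV => <- //; apply/s_supp.
        have Ej : u (val ((sigma^-1)%g j)) = val j.
          by have := Hs ((sigma^-1)%g j); rewrite permKV => <- //; apply/s_supp.
        by rewrite /R /= Ei Ej.
      * by apply/allP => i; rewrite mem_filter => /andP [].
      * apply: sorted_filter; first by move=> a b c; apply: ltn_trans.
        by have := iota_ltn_sorted 0 K; rewrite -val_enum_ord sorted_map.
    + by move: Hst; rewrite Hsort /tgtg map_comp.
    + move=> x; rewrite mem_filter memf mem_iota /=.
      rewrite (_ : x \in tgtg = (x \in s)); last exact: memL.
      by case xs: (x \in s) => //=; rewrite sK.
  done.
Qed.
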